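(* Let $M$ be a matroid on $S$ and $N$ a matroid on $T$ with $S\cap T=\emptyset$, and let $L=M\mathbin{\Box} N$. Then for all $A\subseteq S\cup T$, $$\rho_L(A)=\rho_M(A\cap S)+\rho_N(A\cap T)+\min\{\lambda_M(A\cap S),\ \nu_N(A\cap T)\}.$$
   Context: For a matroid $M$ on $S$ write $\rho_M$ for rank, $\rho(M)=\rho_M(S)$, $\nu_M(A)=|A|-\rho_M(A)$ (nullity), $\lambda_M(A)=\rho(M)-\rho_M(A)$ (rank-lack). For matroids $M$ on $S$ and $N$ on $T$ with $S\cap T=\emptyset$, the free product $M\mathbin{\Box} N$ is the matroid on $S\cup T$ whose independent sets are those $A$ with $A\cap S$ independent in $M$ and $\lambda_M(A\cap S)\geq\nu_N(A\cap T)$. *)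

(* Defs.v *)
From mathcomp Require Import all_boot.
Set Implicit Arguments. Unset Strict Implicit. Unset Printing Implicit Defensive.

(* The ground set of a matroid is the finite type E itself. *)
Record matroid (E : finType) := Matroid {
  indep : {set E} -> bool;
  indep0 : indep set0;
  indep_sub : forall I J : {set E}, J \subset I -> indep I -> indep J;
  indep_aug : forall I J : {set E}, indep I -> indep J -> #|I| < #|J| ->
      exists2 e, e \in J :\: I & indep (e |: I)
}.

Definition rank_of (E : finType) (ind : {set E} -> bool) (A : {set E}) : nat :=
  \max_(B : {set E} | (B \subset A) && ind B) #|B|.

Definition rk (E : finType) (M : matroid E) (A : {set E}) : nat := rank_of (indep M) A.
Definition rkM (E : finType) (M : matroid E) : nat := rk M [set: E].
Definition nullity (E : finType) (M : matroid E) (A : {set E}) : nat := #|A| - rk M A.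
Definition ranklack (E : finType) (M : matroid E) (A : {set E}) : nat := rkM M - rk M A.

(* The free product M [] N on the disjoint union S + T, given by its
   independent sets: A with A ∩ S independent in M and
   lambda_M(A ∩ S) >= nu_N(A ∩ T). *)
Definition free_prod_indep (S T : finType) (M : matroid S) (N : matroid T)
  (A : {set S + T}) : bool :=
  indep M (inl @^-1: A) && (nullity N (inr @^-1: A) <= ranklack M (inl @^-1: A)).

(* Main.v *)
Require Import Defs.
From mathcomp Require Import all_boot.
From mathcomp Require Import zify.
Set Implicit Arguments. Unset Strict Implicit. Unset Printing Implicit Defensive.

Section Aux.
Variable E : finType.
Implicit Types (ind : {set E} -> bool) (A B : {set E}).

Lemma rank_of_ub ind A m :
  (forall B, B \subset A -> ind B -> #|B| <= m) -> rank_of ind A <= m.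
Proof. by move=> H; apply/bigmax_leqP => B /andP[]; apply: H. Qed.

Lemma rank_of_lb ind A B : B \subset A -> ind B -> #|B| <= rank_of ind A.
Proof. by move=> sBA iB; apply: (@leq_bigmax_cond _ (fun B : {set E} => (B \subset A) && ind B) (fun B : {set E} => #|B|)); rewrite sBA. Qed.

Lemma rank_of_wit ind A : ind set0 ->
  exists2 B : {set E}, (B \subset A) && ind B & rank_of ind A = #|B|.
Proof.
move=> i0; rewrite /rank_of.
rewrite (bigmax_eq_arg set0); last by rewrite sub0set i0.
set B := [arg max_(_ > _ | _) _].
exists B => //; rewrite /B; by case: arg_maxnP => //; rewrite sub0set i0.
Qed.
Lemma ex_sub_card A k : k <= #|A| -> exists2 D : {set E}, D \subset A & #|D| = k.
Proof.
elim: k => [|k IH] hk; first by exists set0; rewrite ?sub0set ?cards0.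
have [D sDA cD] := IH (ltnW hk).
have : #|A :\: D| > 0.
  have := cardsID D A; have h : #|A :&: D| <= #|D| by apply: subset_leq_card; apply: subsetIr.
  lia.
case/card_gt0P => x; rewrite inE => /andP[xD xA].
exists (x |: D); first by rewrite subUset sub1set xA.
by rewrite cardsU1 xD cD.
Qed.
End Aux.

Section Mat.
Variable E : finType.
Variable M : matroid E.
Implicit Types (A B : {set E}).

Lemma rk_card A : rk M A <= #|A|.
Proof. by apply: rank_of_ub => B sBA _; apply: subset_leq_card. Qed.

Lemma rk_indep A : indep M A -> rk M A = #|A|.
Proof. by move=> iA; apply/eqP; rewrite eqn_leq rk_card rank_of_lb. Qed.

Lemma rk_mono A B : A \subset B -> rk M A <= rk M B.
Proof.
move=> sAB; rewrite /rk; have [C /andP[sCA iC] ->] := @rank_of_wit _ (indep M) A (indep0 M).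
by apply: rank_of_lb => //; apply: subset_trans sAB.
Qed.

Lemma rk_sub A B : A \subset B -> rk M B <= rk M A + #|B :\: A|.
Proof.
move=> sAB; rewrite /rk; have [C /andP[sCB iC] ->] := @rank_of_wit _ (indep M) B (indep0 M).
have h1 : #|C :&: A| <= rank_of (indep M) A.
  by apply: rank_of_lb; [apply: subsetIr | apply: indep_sub iC; apply: subsetIl].
have h2 : #|C :\: A| <= #|B :\: A| by apply: subset_leq_card; apply: setSD.
have := cardsID A C; lia.
Qed.

Lemma nullity_mono A B : A \subset B -> nullity M A <= nullity M B.
Proof.
move=> sAB; rewrite /nullity.
have h := rk_sub sAB; have h2 := rk_card A; have h3 := rk_card B.
have := cardsID A B; have -> : B :&: A = A by apply/setIidPr.
lia.
Qed.

Lemma rk_le_rkM A : rk M A <= rkM M.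
Proof. exact: rk_mono (subsetT _). Qed.

Lemma rk_basis A : exists2 I : {set E}, (I \subset A) && indep M I & #|I| = rk M A.
Proof. by rewrite /rk; have [I h ->] := @rank_of_wit _ (indep M) A (indep0 M); exists I. Qed.
End Mat.

Section Sum.
Variables S T : finType.

Lemma preim_inl (I : {set S}) (K : {set T}) :
  inl @^-1: (inl @: I :|: inr @: K) = I.
Proof.
apply/setP => x; rewrite !inE mem_imset; last by move=> ? ? [].
by case: (boolP (x \in I)) => //= _; apply/imsetP => -[y _].
Qed.

Lemma preim_inr (I : {set S}) (K : {set T}) :
  inr @^-1: (inl @: I :|: inr @: K) = K.
Proof.
apply/setP => x; rewrite !inE (mem_imset _ _ (f:=inr)); last by move=> ? ? [].
by case: (boolP (x \in K)) => /=; rewrite ?orbT // orbF; move=> _; apply/imsetP => -[y _].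
Qed.

Lemma card_split (I : {set S}) (K : {set T}) :
  #|inl @: I :|: inr @: K| = #|I| + #|K|.
Proof.
rewrite cardsU !card_imset; try by move=> ? ? [].
suff -> : inl @: I :&: inr @: K = set0 by rewrite cards0 subn0.
apply/setP => x; rewrite !inE; apply/negP => /andP[/imsetP[y _ ->] /imsetP[z _]].
by [].
Qed.

Lemma split_set (B : {set S + T}) :
  B = inl @: (inl @^-1: B) :|: inr @: (inr @^-1: B).
Proof.
apply/setP => -[x|x]; rewrite !inE.
  rewrite mem_imset; last by move=> ? ? [].
  rewrite inE; case: (inl x \in B) => //=; apply/esym/imsetP => -[y _] //.
rewrite (mem_imset _ _ (f:=inr)); last by move=> ? ? [].
rewrite inE orbC; case: (inr x \in B) => //=; apply/esym/imsetP => -[y _] //.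
Qed.
End Sum.

Theorem proposition3p4 (S T : finType) (M : matroid S) (N : matroid T)
  (A : {set S + T}) :
  rank_of (free_prod_indep M N) A =
    rk M (inl @^-1: A) + rk N (inr @^-1: A)
    + minn (ranklack M (inl @^-1: A)) (nullity N (inr @^-1: A)).
Proof.
set X := inl @^-1: A; set Y := inr @^-1: A.
apply/eqP; rewrite eqn_leq; apply/andP; split.
  apply: rank_of_ub => B sBA /andP[iB hB].
  rewrite (split_set B) card_split.
  set BS := inl @^-1: B; set BT := inr @^-1: B.
  have sS : BS \subset X by apply: preimsetS.
  have sT : BT \subset Y by apply: preimsetS.
  have h1 : #|BS| <= rk M X by rewrite -(rk_indep iB); apply: rk_mono.
  have h2 : rk N BT <= rk N Y by apply: rk_mono.
  have h3 := nullity_mono N sT.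
  have h4 := rk_card N BT.
  have h5 := rk_le_rkM M X.
  move: hB; rewrite /nullity /ranklack (rk_indep iB) -/BS -/BT => hB.
  rewrite /nullity /ranklack in h3 *.
  have h6 := rk_card M X. have h7 := rk_le_rkM M BS.
  rewrite (rk_indep iB) in h7.
  lia.
have [I /andP[sIX iI] cI] := rk_basis M X.
have [J /andP[sJY iJ] cJ] := rk_basis N Y.
set k := minn (ranklack M X) (nullity N Y).
have hk : k <= #|Y :\: J|.
  have := cardsID J Y; have -> : Y :&: J = J by apply/setIidPr.
  rewrite /k /nullity -cJ; lia.
have [D sD cD] : exists2 D : {set T}, D \subset Y :\: J & #|D| = k.
  exact: ex_sub_card.
set B := inl @: I :|: inr @: (J :|: D).
have dJD : [disjoint J & D].
  by rewrite -setI_eq0; apply/eqP/setP => x; rewrite !inE; apply/andP => -[xJ /(subsetP sD)]; rewrite !inE xJ.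
have cJD : #|J :|: D| = #|J| + k by rewrite cardsU (disjoint_setI0 dJD) cards0 subn0 cD.
have sDY : D \subset Y by apply: subset_trans sD (subsetDl _ _).
have sJDY : J :|: D \subset Y by rewrite subUset sJY sDY.
have rJD : rk N (J :|: D) = #|J|.
  apply/eqP; rewrite eqn_leq; apply/andP; split.
    by rewrite cJ; apply: rk_mono.
  by apply: rank_of_lb => //; apply: subsetUl.
have hkl : k <= ranklack M X by rewrite /k geq_minl.
have iB : free_prod_indep M N B.
  rewrite /free_prod_indep /B preim_inl preim_inr iI /=.
  rewrite /nullity /ranklack rJD cJD (rk_indep iI) cI.
  rewrite /ranklack in hkl; lia.
have sBA : B \subset A.
  by rewrite /B subUset !sub_imset_pre sIX sJDY.
have := rank_of_lb sBA iB.
by rewrite /B card_split cJD cI cJ -/k addnA.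
Qed.
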